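(* Let $n\ge1$ and let $G$ be a cyclic subgroup of $\mathfrak{S}_n$. If the field $k$ is of sufficiently large cardinality, with $\mathrm{char}(k)\ne2$ whenever $|G|$ is even, then there is an $n\times n$ quantum parameter matrix $\mathfrak{q}$ with $\mathrm{Aut}_{\mathrm{gr}}(S_{\mathfrak{q}}(k^n))\cong(k^\times)^n\rtimes G$.
   Context: An $n\times n$ quantum parameter matrix is a matrix $\mathfrak{q}=(q_{ij})$ over $k$ with $q_{ii}=1$ and $q_{ij}q_{ji}=1$ for all $i,j$. $S_{\mathfrak{q}}(k^n)$ is the $k$-algebra generated by the standard basis $v_1,\dots,v_n$ of $k^n$ with relations $v_jv_i=q_{ij}v_iv_j$, graded by $\deg v_i=1$; $\mathrm{Aut}_{\mathrm{gr}}$ denotes its group of degree-preserving algebra automorphisms, viewed as a subgroup of $\mathrm{GL}(n,k)$. In $(k^\times)^n\rtimes G$, $(k^\times)^n$ is the group of invertible diagonal matrices and $G\subseteq\mathfrak{S}_n$ acts by permuting coordinates (a group of monomial matrices). *)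

(* Defs.v *)
From HB Require Import structures.
From mathcomp Require Import all_boot all_order all_algebra all_fingroup all_solvable.
Set Implicit Arguments. Unset Strict Implicit. Unset Printing Implicit Defensive.
Import GRing.Theory.
Local Open Scope ring_scope.

Definition quantum_param_matrix (k : fieldType) (n : nat) (q : 'M[k]_n) : Prop :=
  forall i j : 'I_n, q i i = 1 /\ q i j * q j i = 1.

(* V (x) V is modelled by n x n matrices: v_i (x) v_j  <->  delta_mx i j.
   The defining quadratic relation v_j v_i - q_ij v_i v_j of S_q(k^n). *)
Definition qrel (k : fieldType) (n : nat) (q : 'M[k]_n) (i j : 'I_n) : 'M[k]_n :=
  delta_mx j i - q i j *: delta_mx i j.

Definition in_qrel_span (k : fieldType) (n : nat) (q : 'M[k]_n) (M : 'M[k]_n) : Prop :=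
  exists c : 'M[k]_n, M = \sum_(i < n) \sum_(j < n) c i j *: qrel q i j.

(* The linear map g : v_i |-> sum_a A a i v_a (column i of A is g v_i)
   extends to an algebra endomorphism of S_q(k^n) = T(V)/(R) iff
   (g (x) g)(R) is contained in R; (g (x) g)(M) = A M A^T. *)
Definition preserves_qrel (k : fieldType) (n : nat) (q : 'M[k]_n) (A : 'M[k]_n) : Prop :=
  forall i j : 'I_n, in_qrel_span q (A *m qrel q i j *m A^T).

(* Aut_gr(S_q(k^n)) as a subset of GL(n,k): degree-preserving algebra
   automorphisms, i.e. invertible A such that both A and A^-1 induce
   algebra endomorphisms. *)
Definition Aut_gr (k : fieldType) (n : nat) (q : 'M[k]_n) (A : 'M[k]_n) : Prop :=
  [/\ A \in unitmx, preserves_qrel q A & preserves_qrel q (invmx A)].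

(* (k^x)^n ⋊ G as a group of monomial matrices: D * P_sigma with D
   invertible diagonal and sigma in G. *)
Definition monomial_group (k : fieldType) (n : nat) (G : {set 'S_n}) (A : 'M[k]_n) : Prop :=
  exists d : 'rV[k]_n, (forall i, d 0 i != 0) /\
    exists2 s, s \in G & A = diag_mx d *m perm_mx s.

Definition card_at_least (k : eqType) (N : nat) : Prop :=
  exists s : seq k, uniq s /\ (N <= size s)%N.

(* Main.v *)
Require Import Defs.
From HB Require Import structures.
From mathcomp Require Import all_boot all_order all_algebra all_fingroup all_solvable.
From mathcomp Require Import zify ring.

Module MA.
Set Implicit Arguments. Unset Strict Implicit. Unset Printing Implicit Defensive.
Import GRing.Theory.
Local Open Scope ring_scope.

Lemma sum2_delta (k : fieldType) n (f : 'I_n -> 'I_n -> k) a b :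
  \sum_(i < n) \sum_(j < n) f i j * ((a == i) && (b == j))%:R = f a b.
Proof.
rewrite (bigD1 a) //= [X in _ + X = _]big1 ?addr0; last first.
  move=> i nia; apply: big1 => j _.
  by rewrite eq_sym (negbTE nia) mulr0.
rewrite (bigD1 b) //= [X in _ + X = _]big1 ?addr0; last first.
  by move=> j njb; rewrite eq_sym (negbTE njb) andbF mulr0.
by rewrite !eqxx mulr1.
Qed.

Lemma qrel_sum_entry (k : fieldType) n (q c : 'M[k]_n) a b :
  (\sum_(i < n) \sum_(j < n) c i j *: qrel q i j) a b = c b a - q a b * c a b.
Proof.
rewrite summxE; under eq_bigr => i _ do rewrite summxE.
under eq_bigr => i _ do under eq_bigr => j _ do rewrite !mxE mulrBr.
under eq_bigr => i _ do rewrite sumrB.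
rewrite sumrB.
have -> : \sum_(i < n) \sum_(j < n) c i j * ((a == j) && (b == i))%:R = c b a.
  rewrite exchange_big /=.
  by rewrite -(sum2_delta (fun j i => c i j) a b); apply: eq_bigr => i _; apply: eq_bigr => j _.
congr (_ - _).
rewrite -(sum2_delta (fun i j => q i j * c i j) a b).
apply: eq_bigr => i _; apply: eq_bigr => j _.
by rewrite mulrA [c i j * q i j]mulrC.
Qed.

Lemma span_char (k : fieldType) n (q : 'M[k]_n) (hq : quantum_param_matrix q) M :
  in_qrel_span q M <-> (forall a b, M a b + q a b * M b a = 0) /\ (forall a, M a a = 0).
Proof.
split.
  case=> c ->; split=> [a b|a]; rewrite !qrel_sum_entry.
    have [_ h] := hq a b.
    by rewrite mulrBr mulrA h mul1r addrC addrA subrK mulrC subrr.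
  by have [-> _] := hq a a; rewrite mul1r subrr.
case=> h1 h2.
exists (\matrix_(a, b) if (a < b)%N then M b a else 0).
apply/matrixP => a b; rewrite qrel_sum_entry !mxE.
case: (ltngtP a b) => [ab|ba|/val_inj ->]; rewrite ?h2 ?mulr0 ?subr0 //.
by rewrite sub0r; apply/eqP; rewrite -addr_eq0 h1.
Qed.

End MA.
Import MA.

Module MC.
Set Implicit Arguments. Unset Strict Implicit. Unset Printing Implicit Defensive.
Import GRing.Theory.
Local Open Scope ring_scope.

Lemma conj_delta_entry (k : fieldType) n (A : 'M[k]_n) u v a b :
  (A *m delta_mx u v *m A^T) a b = A a u * A b v.
Proof.
rewrite -[delta_mx u v](@mul_delta_mx _ n 1 n 0) mulmxA -colE -mulmxA -rowE.
by rewrite mxE big_ord1 !mxE.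
Qed.

Lemma conj_qrel_entry (k : fieldType) n (q A : 'M[k]_n) i j a b :
  (A *m qrel q i j *m A^T) a b = A a j * A b i - q i j * (A a i * A b j).
Proof.
by rewrite /qrel mulmxBr mulmxBl -scalemxAr -scalemxAl -!conj_delta_entry !mxE.
Qed.

Definition mono (k : fieldType) n (d : 'rV[k]_n) (s : 'S_n) : 'M[k]_n :=
  diag_mx d *m perm_mx s.

Lemma monoE (k : fieldType) n (d : 'rV[k]_n) s a j :
  mono d s a j = d 0 a * (s a == j)%:R.
Proof. by rewrite /mono mul_diag_mx !mxE. Qed.

Lemma mono_mul1 (k : fieldType) n (d : 'rV[k]_n) (s : 'S_n) :
  (forall i, d 0 i != 0) ->
  mono d s *m mono (\row_x (d 0 ((s^-1)%g x))^-1) (s^-1)%g = 1%:M.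
Proof.
move=> hd; apply/matrixP => a b.
rewrite !mxE (bigD1 (s a)) //= big1 => [|x /negbTE nx]; last first.
  by rewrite monoE eq_sym nx mulr0 mul0r.
rewrite !monoE !mxE eqxx mulr1 permK addr0 mulrA mulfV ?hd // mul1r.
by rewrite eq_sym.
Qed.

Lemma mono_unit (k : fieldType) n (d : 'rV[k]_n) (s : 'S_n) :
  (forall i, d 0 i != 0) -> mono d s \in unitmx.
Proof. by move=> hd; case: (mulmx1_unit (mono_mul1 s hd)). Qed.

Lemma mono_inv (k : fieldType) n (d : 'rV[k]_n) (s : 'S_n) :
  (forall i, d 0 i != 0) ->
  invmx (mono d s) = mono (\row_x (d 0 ((s^-1)%g x))^-1) (s^-1)%g.
Proof.
move=> hd; have hu := mono_unit s hd.
by rewrite -[invmx _]mulmx1 -(mono_mul1 s hd) mulmxA mulVmx // mul1mx.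
Qed.

Lemma sum2_delta_gen (V : zmodType) n (F : 'I_n -> 'I_n -> V) a b :
  \sum_(i < n) \sum_(j < n) (if (i == a) && (j == b) then F i j else 0) = F a b.
Proof.
rewrite (bigD1 a) //= [X in _ + X = _]big1 ?addr0; last first.
  move=> i nia; apply: big1 => j _.
  by rewrite (negbTE nia).
rewrite (bigD1 b) //= [X in _ + X = _]big1 ?addr0; last first.
  by move=> j njb; rewrite (negbTE njb) andbF.
by rewrite !eqxx.
Qed.

Lemma span_scale_qrel (k : fieldType) n (q : 'M[k]_n) (c : k) x y :
  in_qrel_span q (c *: qrel q x y).
Proof.
exists (\matrix_(i, j) if (i == x) && (j == y) then c else 0).
rewrite -(sum2_delta_gen (fun i j => c *: qrel q i j) x y).
apply: eq_bigr => i _; apply: eq_bigr => j _; rewrite mxE.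
by case: ifP => _; rewrite ?scale0r.
Qed.

Lemma mono_pres (k : fieldType) n (q : 'M[k]_n) (d : 'rV[k]_n) (s : 'S_n) :
  (forall a b, q ((s^-1)%g a) ((s^-1)%g b) = q a b) ->
  preserves_qrel q (mono d s).
Proof.
move=> hs i j.
have -> : mono d s *m qrel q i j *m (mono d s)^T =
    (d 0 ((s^-1)%g i) * d 0 ((s^-1)%g j)) *: qrel q ((s^-1)%g i) ((s^-1)%g j).
  apply/matrixP => a b; rewrite conj_qrel_entry !monoE !mxE hs.
  have E : forall u v, d 0 a * (s a == u)%:R * (d 0 b * (s b == v)%:R) =
      d 0 ((s^-1)%g u) * d 0 ((s^-1)%g v) * ((a == (s^-1)%g u) && (b == (s^-1)%g v))%:R.
    have sE : forall x y, (s x == y) = (x == (s^-1)%g y).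
      by move=> x y; apply/eqP/eqP => [<-|->]; rewrite ?permK ?permKV.
    move=> u v; rewrite !sE.
    by case: eqVneq => [->|_]; case: eqVneq => [->|_]; rewrite /= ?mulr1 ?mulr0 ?mul0r.
  rewrite !E mulrBr [d 0 ((s^-1)%g j) * _]mulrC; congr (_ - _); by rewrite mulrCA.
exact: span_scale_qrel.
Qed.

End MC.
Import MC.

Module MD.
Set Implicit Arguments. Unset Strict Implicit. Unset Printing Implicit Defensive.
Import GRing.Theory.
Local Open Scope ring_scope.

Lemma aut_mono (k : fieldType) n (q A : 'M[k]_n) :
  quantum_param_matrix q -> (forall i j, i != j -> q i j != 1) ->
  A \in unitmx -> preserves_qrel q A ->
  exists d : 'rV[k]_n, exists s : 'S_n,
    [/\ forall i, d 0 i != 0, A = mono d s &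
        forall a b, q ((s^-1)%g a) ((s^-1)%g b) = q a b].
Proof.
move=> hq hq1 hu hp.
have disj : forall a i j, i != j -> A a i * A a j = 0.
  move=> a i j nij.
  have [_ h2] := (span_char hq _).1 (hp i j).
  move: (h2 a); rewrite conj_qrel_entry [A a j * _]mulrC -{1}[A a i * A a j]mul1r -mulrBl.
  move/eqP; rewrite mulf_eq0 subr_eq0 eq_sym (negbTE (hq1 _ _ nij)) /=.
  by move/eqP.
have colnz : forall j, exists a, A a j != 0.
  move=> j; case: (boolP [exists a, A a j != 0]) => [/existsP //|].
  rewrite negb_exists => /forallP h.
  have := mulVmx hu; move/matrixP => /(_ j j); rewrite !mxE eqxx /=.
  rewrite big1 => [|x _]; last by rewrite (eqP (negbNE (h x))) mulr0.
  by move/eqP; rewrite eq_sym oner_eq0.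
pose pi j := odflt j [pick a | A a j != 0].
have piP : forall j, A (pi j) j != 0.
  move=> j; rewrite /pi; case: pickP => [a //|h] /=.
  by have [a ha] := colnz j; move: (h a) ha => ->.
have pi_inj : injective pi.
  move=> i j eij; apply/eqP; apply/negP => /negP nij.
  have := disj (pi i) i j nij; apply/eqP.
  by rewrite mulf_neq0 // ?piP // eij piP.
pose p := perm pi_inj.
have pE : forall j, p j = pi j by move=> j; rewrite permE.
have nz : forall a j, A a j != 0 -> a = p j.
  move=> a j naj; have ea : a = p ((p^-1)%g a) by rewrite permKV.
  case: (eqVneq ((p^-1)%g a) j) => [<-//|nj].
  have := disj a _ _ nj; move/eqP; rewrite mulf_eq0 (negbTE naj) orbF => /eqP h.
  by move: (piP ((p^-1)%g a)); rewrite -pE permKV h eqxx.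
exists (\row_a A a ((p^-1)%g a)); exists (p^-1)%g; split.
- by move=> i; rewrite mxE -{1}[i](permKV p) pE piP.
- apply/matrixP => a j; rewrite monoE mxE.
  case: (eqVneq ((p^-1)%g a) j) => [<-|nj]; first by rewrite mulr1.
  rewrite mulr0; apply/eqP; apply/negP => /negP/nz ea.
  by move: nj; rewrite ea permK eqxx.
- move=> i j; rewrite invgK !pE.
  case: (eqVneq i j) => [<-|nij].
    by rewrite (hq (pi i) i).1 (hq i i).1.
  have [h1 _] := (span_char hq _).1 (hp i j).
  move: (h1 (pi i) (pi j)); rewrite !conj_qrel_entry.
  have z1 : A (pi i) j = 0.
    case: (eqVneq (A (pi i) j) 0) => // /nz; rewrite pE => /pi_inj eij.
    by move: nij; rewrite eij eqxx.
  have z2 : A (pi j) i = 0.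
    case: (eqVneq (A (pi j) i) 0) => // /nz; rewrite pE => /pi_inj eij.
    by move: nij; rewrite eij eqxx.
  rewrite z1 z2 !mul0r !mulr0 !sub0r subr0.
  set X := A (pi i) i * A (pi j) j.
  have nX : X != 0 by rewrite mulf_neq0 ?piP.
  rewrite [A (pi j) j * _]mulrC -/X -mulNr -mulrDl.
  move/eqP; rewrite mulf_eq0 (negbTE nX) orbF addrC subr_eq0.
  by move/eqP.
Qed.

End MD.
Import MD.

Module MG.
Set Implicit Arguments. Unset Strict Implicit. Unset Printing Implicit Defensive.
Import GRing.Theory.
Local Open Scope ring_scope.

Lemma generic_seq (k : fieldType) (s : seq k) : uniq s -> forall M, (2 * M + 4 <= size s)%N ->
  exists t : seq k, [/\ size t = M, uniq t, 0 \notin t &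
     forall x y, x \in t -> y \in t -> x * y != 1].
Proof.
move=> us; elim=> [|M IH] hM.
  by exists [::].
have [|t [st ut t0 tp]] := IH; first by apply: leq_trans hM; rewrite leq_add2r leq_mul2l leqnSn.
pose F := [:: 0; 1; -1] ++ t ++ map GRing.inv t.
have [x xs xF] : exists2 x, x \in s & x \notin F.
  case: (boolP (all (mem F) s)) => [/allP sub|/allPn [x xs xF]]; last by exists x.
  have := uniq_leq_size us sub; rewrite !size_cat size_map st /=.
  move: hM; rewrite mulnS; lia.
move: xF; rewrite !mem_cat !inE !negb_or => /and3P[/and3P[x0 x1 xm1] xt xi].
exists (x :: t); split=> //=; first by rewrite st.
- by rewrite xt.
- by rewrite inE negb_or eq_sym x0.
have key : forall y, y \in t -> x * y != 1.
  move=> y yt; apply/negP => /eqP e.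
  have y0 : y != 0 by apply: contraNneq t0 => <-.
  have : x = y^-1 by rewrite -[x]mulr1 -(mulfV y0) mulrA e mul1r.
  by move=> ex; move: xi; rewrite ex map_f.
move=> u v; rewrite !inE => /orP[/eqP->|ut'] /orP[/eqP->|vt].
- rewrite -expr2 sqrf_eq1 negb_or x1 /=; exact: xm1.
- exact: key.
- by rewrite mulrC key.
- exact: tp.
Qed.

Lemma exists_generic (k : fieldType) M : card_at_least k (2 * M + 4) ->
  exists a : nat -> k, forall m m', (m < M)%N -> (m' < M)%N ->
    [/\ a m != 0, a m * a m' != 1 & (a m = a m' -> m = m')].
Proof.
case=> s [us hs]; have [t [st ut t0 tp]] := generic_seq us hs.
exists (fun m => nth 0 t m) => m m' hm hm'.
have mt : nth 0 t m \in t by rewrite mem_nth ?st.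
have mt' : nth 0 t m' \in t by rewrite mem_nth ?st.
split; first by apply: contraNneq t0 => <-.
  exact: tp.
by move/eqP; rewrite nth_uniq ?st // => /eqP.
Qed.

End MG.
Import MG.

Module MH.
Set Implicit Arguments. Unset Strict Implicit. Unset Printing Implicit Defensive.
Import GRing.Theory Num.Theory.
Local Open Scope ring_scope.

Lemma gcd_lcm_distr (a b c : nat) : gcdn (lcmn a b) c = lcmn (gcdn a c) (gcdn b c).
Proof. exact: Order.NatDvd.meetUl. Qed.

Lemma crt2 (l1 l2 : nat) (r1 r2 : int) :
  ((gcdn l1 l2)%:Z %| r1 - r2)%Z ->
  exists X : int, (l1%:Z %| X - r1)%Z /\ (l2%:Z %| X - r2)%Z.
Proof.
case/dvdzP=> w hw.
have [u [v huv]] := Bezoutz l1 l2.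
exists (r1 - u * l1%:Z * w); split.
  by rewrite addrAC subrr add0r rpredN -mulrA mulrC -mulrA dvdz_mulr.
have -> : r1 - u * l1%:Z * w - r2 = w * v * l2%:Z.
  have e : gcdz l1 l2 = (gcdn l1 l2)%:Z by [].
  rewrite addrAC hw -e -huv; ring.
exact: dvdz_mull.
Qed.

Section CRT.
Variables (I : eqType) (l : I -> nat) (r : I -> int).

Definition lcms (s : seq I) := \big[lcmn/1%N]_(j <- s) l j.

Lemma lcms_dvd s j : j \in s -> (l j %| lcms s)%N.
Proof.
elim: s => // x s IH; rewrite inE /lcms big_cons => /orP[/eqP->|js].
  exact: dvdn_lcml.
by apply: dvdn_trans (IH js) _; exact: dvdn_lcmr.
Qed.

Lemma gcd_lcms_dvd s c z : (forall j, j \in s -> (gcdn (l j) c %| z)%N) ->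
  (gcdn (lcms s) c %| z)%N.
Proof.
elim: s => [|x s IH] h; first by rewrite /lcms big_nil gcd1n dvd1n.
rewrite /lcms big_cons gcd_lcm_distr dvdn_lcm; apply/andP; split.
  by apply: h; rewrite inE eqxx.
by apply: IH => j js; apply: h; rewrite inE js orbT.
Qed.

Lemma crt_seq (s : seq I) :
  (forall i j, i \in s -> j \in s -> ((gcdn (l i) (l j))%:Z %| r i - r j)%Z) ->
  exists X : int, forall i, i \in s -> ((l i)%:Z %| X - r i)%Z.
Proof.
elim: s => [|i s IH] h; first by exists 0.
have [|X0 hX0] := IH.
  by move=> x y xs ys; apply: h; rewrite inE ?xs ?ys orbT.
have hg : ((gcdn (lcms s) (l i))%:Z %| X0 - r i)%Z.
  rewrite dvdzE /=; apply: gcd_lcms_dvd => j js.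
  have -> : X0 - r i = (X0 - r j) + (r j - r i) by rewrite addrA subrK.
  rewrite -(dvdzE (gcdn (l j) (l i))%:Z) rpredD //.
    by apply: dvdz_trans (hX0 j js); rewrite dvdzE /= dvdn_gcdl.
  by apply: h; rewrite inE ?js ?eqxx ?orbT.
have [X [h1 h2]] := crt2 hg.
exists X => j; rewrite inE => /orP[/eqP->//|js].
have -> : X - r j = (X - X0) + (X0 - r j) by rewrite addrA subrK.
rewrite rpredD // ?hX0 //.
by apply: dvdz_trans h1; rewrite dvdzE /= lcms_dvd.
Qed.

End CRT.

End MH.
Import MH.

Module ME.
Set Implicit Arguments. Unset Strict Implicit. Unset Printing Implicit Defensive.
Import GRing.Theory.
Local Open Scope ring_scope.

Section Q.
Variables (n : nat) (G : {group 'S_n}).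

Definition pact (g : 'S_n) (p : 'I_n * 'I_n) := (g p.1, g p.2).
Definition code (p : 'I_n * 'I_n) : nat := enum_rank p.
Definition gmin p : 'S_n := [arg min_(g < 1%g in G) code (pact g p)].
Definition cmin p := code (pact (gmin p) p).
Definition selfp (i j : 'I_n) := [exists g in G, (g i == j) && (g j == i)].

Lemma pactM g h p : pact (g * h)%g p = pact h (pact g p).
Proof. by rewrite /pact !permM. Qed.

Lemma gminP p : gmin p \in G /\ forall g, g \in G -> (cmin p <= code (pact g p))%N.
Proof.
rewrite /cmin /gmin; case: arg_minnP => [|g gG h]; first exact: group1.
by split=> // g' /h.
Qed.

Lemma cmin_act g p : g \in G -> cmin (pact g p) = cmin p.
Proof.
move=> gG; have [m1 h1] := gminP p; have [m2 h2] := gminP (pact g p).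
apply/eqP; rewrite eqn_leq; apply/andP; split.
  have := h2 (g^-1 * gmin p)%g; rewrite groupM ?groupV // => /(_ isT).
  by rewrite -pactM mulgA mulgV mul1g.
have := h1 (g * gmin (pact g p))%g; rewrite groupM // => /(_ isT).
by rewrite /cmin pactM.
Qed.

Lemma cmin_eq p p' : cmin p = cmin p' -> exists2 g, g \in G & p' = pact g p.
Proof.
move=> e; have [m1 _] := gminP p; have [m2 _] := gminP p'.
have /enum_rank_inj e' : enum_rank (pact (gmin p) p) = enum_rank (pact (gmin p') p').
  by apply/val_inj.
exists (gmin p * (gmin p')^-1)%g; first by rewrite groupM ?groupV.
by rewrite pactM e' -pactM mulgV /pact !perm1 -surjective_pairing.
Qed.

Lemma cmin_lt p : (cmin p < #|{: 'I_n * 'I_n}|)%N.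
Proof. by rewrite /cmin /code ltn_ord. Qed.

Lemma selfpC i j : selfp i j = selfp j i.
Proof.
by apply/existsP/existsP => -[g /andP[gG /andP[h1 h2]]]; exists g; rewrite gG h1 h2.
Qed.

Lemma selfp_act g i j : g \in G -> selfp (g i) (g j) = selfp i j.
Proof.
move=> gG; apply/existsP/existsP => -[h /andP[hG /andP[/eqP h1 /eqP h2]]].
  exists (g * h * g^-1)%g; rewrite !groupM ?groupV //= !permM h1 h2 !permK.
  by rewrite !eqxx.
exists (g^-1 * h * g)%g; rewrite !groupM ?groupV //= !permM !permK h1 h2.
by rewrite !eqxx.
Qed.

Lemma selfp_even i j : i != j -> selfp i j -> ~~ odd #|G|.
Proof.
move=> nij /existsP[g /andP[gG /andP[/eqP h1 /eqP h2]]].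
apply/negP => oddG.
have og : odd #[g]%g := dvdn_odd (order_dvdG gG) oddG.
have e : (g ^+ (2 * (#[g]%g.+1)./2) = g)%g.
  have -> : (2 * (#[g]%g.+1)./2 = #[g]%g.+1)%N.
    by rewrite mul2n -[RHS]odd_double_half /= og.
  by rewrite expgSr expg_order mul1g.
have fx : (g ^+ 2)%g i = i by rewrite expgS expg1 permM h1 h2.
move: h1; rewrite -e expgM permX_fix // => eij.
by move: nij; rewrite eij eqxx.
Qed.

Variables (k : fieldType) (a : nat -> k).

Definition qmat : 'M[k]_n := \matrix_(i, j)
  if i == j then 1 else if selfp i j then -1
  else if (cmin (i, j) < cmin (j, i))%N then a (cmin (i, j)) else (a (cmin (j, i)))^-1.


Definition generic := forall m m', (m < #|{: 'I_n * 'I_n}|)%N -> (m' < #|{: 'I_n * 'I_n}|)%N ->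
  [/\ a m != 0, a m * a m' != 1 & (a m = a m' -> m = m')].

Lemma cmin_sym_neq i j : ~~ selfp i j -> cmin (i, j) != cmin (j, i).
Proof.
move=> ns; apply/negP => /eqP /cmin_eq [g gG [e1 e2]].
by move: ns; apply/negP/negPn/existsP; exists g; rewrite gG -e1 -e2 !eqxx.
Qed.

Lemma qmat_quantum : generic -> quantum_param_matrix qmat.
Proof.
move=> ha i j; rewrite !mxE eqxx; split=> //.
case: (eqVneq i j) => [_|nij]; first by rewrite mulr1.
rewrite selfpC.
case: ifP => [_|/negbT ns]; first by rewrite mulrNN mulr1.
have := cmin_sym_neq ns; rewrite selfpC in ns.
case: ltngtP => // [c12|c21] _.
- by rewrite mulfV //; have [] := ha _ _ (cmin_lt (i, j)) (cmin_lt (i, j)).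
- by rewrite mulVf //; have [] := ha _ _ (cmin_lt (j, i)) (cmin_lt (j, i)).
Qed.

Lemma qmat_act g i j : g \in G -> qmat (g i) (g j) = qmat i j.
Proof.
move=> gG; rewrite !mxE (inj_eq perm_inj) selfp_act //.
rewrite -[(g i, g j)]/(pact g (i, j)) -[(g j, g i)]/(pact g (j, i)) !cmin_act //.
Qed.

Lemma qmat_vals i j : i != j -> ~~ selfp i j ->
  (cmin (i, j) < cmin (j, i))%N /\ qmat i j = a (cmin (i, j)) \/
  (cmin (j, i) < cmin (i, j))%N /\ qmat i j = (a (cmin (j, i)))^-1.
Proof.
move=> nij ns; rewrite mxE (negbTE nij) (negbTE ns).
have := cmin_sym_neq ns.
by case: ltngtP => // h _; [left|right].
Qed.

Lemma qmat_neq1 i j : generic -> i != j -> (~~ odd #|G| -> (2%:R : k) != 0) ->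
  qmat i j != 1.
Proof.
move=> ha nij h2.
case: (boolP (selfp i j)) => [sp|ns].
  rewrite mxE (negbTE nij) sp.
  have := h2 (selfp_even nij sp); apply: contra => /eqP e.
  by rewrite mulr2n -{1}e addNr.
have [[_ ->]|[_ ->]] := qmat_vals nij ns.
- apply/eqP => e; have [_ + _] := ha _ _ (cmin_lt (i, j)) (cmin_lt (i, j)).
  by rewrite e mulr1 eqxx.
- rewrite invr_eq1; apply/eqP => e; have [_ + _] := ha _ _ (cmin_lt (j, i)) (cmin_lt (j, i)).
  by rewrite e mulr1 eqxx.
Qed.

Lemma qmat_ident i j i' j' : generic -> i != j -> ~~ selfp i j ->
  qmat i' j' = qmat i j -> exists2 g, g \in G & g i = i' /\ g j = j'.
Proof.
move=> ha nij ns e.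
have nsq : forall x, (x = a (cmin (i, j)) \/ x = (a (cmin (j, i)))^-1) -> x != 1 /\ x != -1.
  move=> x [->|->].
    have [_ h _] := ha _ _ (cmin_lt (i, j)) (cmin_lt (i, j)).
    by split; apply: contra h => /eqP ->; rewrite ?mulr1 ?mulrNN ?mulr1.
  have [h0 h _] := ha _ _ (cmin_lt (j, i)) (cmin_lt (j, i)).
  rewrite invr_eq1 -[-1]invrN1 (inj_eq (@invr_inj _)).
  by split; apply: contra h => /eqP ->; rewrite ?mulr1 ?mulrNN ?mulr1.
have [h1 hm1] : qmat i' j' != 1 /\ qmat i' j' != -1.
  by rewrite e; apply: nsq; have [[_ ->]|[_ ->]] := qmat_vals nij ns; [left|right].
have nij' : i' != j'.
  by apply: contra h1 => /eqP ->; rewrite mxE eqxx.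
have ns' : ~~ selfp i' j'.
  by apply: contra hm1 => sp; rewrite mxE (negbTE nij') sp.
have [[_ E]|[_ E]] := qmat_vals nij ns; have [[_ E']|[_ E']] := qmat_vals nij' ns';
  move: e; rewrite E E'.
- move=> e; have [_ _ /(_ e) c] := ha _ _ (cmin_lt (i', j')) (cmin_lt (i, j)).
  by have [g gG [-> ->]] := cmin_eq (esym c); exists g.
- move=> e; have [h0 h _] := ha _ _ (cmin_lt (i, j)) (cmin_lt (j', i')).
  by move: h; rewrite -e mulVf ?eqxx //; have [] := ha _ _ (cmin_lt (j', i')) (cmin_lt (j', i')).
- move=> e; have [h0 h _] := ha _ _ (cmin_lt (i', j')) (cmin_lt (j, i)).
  by move: h; rewrite e mulVf ?eqxx //; have [] := ha _ _ (cmin_lt (j, i)) (cmin_lt (j, i)).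
- move/invr_inj => e; have [_ _ /(_ e) c] := ha _ _ (cmin_lt (j', i')) (cmin_lt (j, i)).
  by have [g gG [-> ->]] := cmin_eq (esym c); exists g.
Qed.

End Q.

End ME.
Import ME.

Module MF.
Set Implicit Arguments. Unset Strict Implicit. Unset Printing Implicit Defensive.
Local Open Scope group_scope.
Import GRing.Theory Num.Theory.
Local Open Scope group_scope.

Section F.
Variables (n : nat) (sig : 'S_n) (G : {group 'S_n}).
Hypothesis hG : G :=: <[sig]>%g.
Variable pi : 'S_n.
Hypothesis hH : forall i j, i != j -> ~~ selfp G i j ->
  exists2 g, g \in G & g i = pi i /\ g j = pi j.

Lemma memG g : g \in G -> exists m, g = (sig ^+ m)%g.
Proof. by rewrite hG => /cycleP. Qed.

Lemma sigG : sig \in G.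
Proof. by rewrite hG cycle_id. Qed.

Lemma comm_sig g x : g \in G -> sig (g x) = g (sig x).
Proof.
case/memG=> m ->; rewrite -!permM; congr (fun_of_perm _ x).
by rewrite -expgS -expgSr.
Qed.

Lemma pi_orb x : exists2 g, g \in G & g x = pi x.
Proof.
case: (boolP [exists y, [forall g in G, g x != y]]) => [/existsP[y /forallP hy]|].
  have nxy : x != y by have := hy 1%g; rewrite group1 perm1.
  have ns : ~~ selfp G x y.
    apply/negP => /existsP[g /andP[gG /andP[e _]]].
    by have := hy g; rewrite gG e.
  by have [g gG [e _]] := hH nxy ns; exists g.
rewrite negb_exists => /forallP /(_ (pi x)); rewrite negb_forall => /existsP[g].
by rewrite negb_imply negbK => /andP[gG /eqP e]; exists g.
Qed.

Lemma two_cycle x : sig (sig x) = x -> forall m, (sig ^+ m)%g x = x \/ (sig ^+ m)%g x = sig x.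
Proof.
move=> h; elim=> [|m [e|e]]; first by left; rewrite expg0 perm1.
  by right; rewrite expgSr permM e.
by left; rewrite expgSr permM e h.
Qed.

Lemma pi_comm x : pi (sig x) = sig (pi x).
Proof.
have [g gG gx] := pi_orb x.
case: (eqVneq (sig x) x) => [e|nx].
  by rewrite e -gx comm_sig // e.
case: (eqVneq (sig (sig x)) x) => [e2|nx2].
  have orb : forall y, (exists2 g, g \in G & g x = y) -> y = x \/ y = sig x.
    by move=> y [h /memG[m ->] <-]; apply: two_cycle.
  have hs : exists2 g, g \in G & g x = pi (sig x).
    have [h hG' hx] := pi_orb (sig x); exists (sig * h)%g; first by rewrite groupM ?sigG.
    by rewrite permM.
  have [|pxe|pxe] := orb (pi x); first by exists g.
  - have [e|e] := orb _ hs.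
      by have := perm_inj (etrans e (esym pxe)) => e'; rewrite e' eqxx in nx.
    by rewrite e pxe.
  - have [e|e] := orb _ hs; first by rewrite e pxe e2.
    by have := perm_inj (etrans e (esym pxe)) => e'; rewrite e' eqxx in nx.
have ns : ~~ selfp G x (sig x).
  apply/negP => /existsP[h /andP[hG' /andP[/eqP e1 /eqP e2]]].
  by move: nx2; rewrite -e1 comm_sig // e2 eqxx.
have nx' : x != sig x by rewrite eq_sym.
have [h hG' [e1 e2]] := hH nx' ns.
by rewrite -e1 -e2 comm_sig.
Qed.


Lemma pi_commX m x : pi ((sig ^+ m) x) = (sig ^+ m) (pi x).
Proof.
elim: m => [|m IH]; first by rewrite expg0 !perm1.
by rewrite expgSr !permM pi_comm IH.
Qed.

Lemma comm_sigX g m x : g \in G -> (sig ^+ m) (g x) = g ((sig ^+ m) x).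
Proof.
move=> gG; elim: m => [|m IH]; first by rewrite expg0 !perm1.
by rewrite expgSr !permM IH comm_sig.
Qed.

Lemma pi_pair x y : exists2 g, g \in G & g x = pi x /\ g y = pi y.
Proof.
case: (boolP [exists g in G, g x == y]) => [/existsP[g0 /andP[g0G /eqP e]]|hn].
  have [g gG gx] := pi_orb x; exists g => //; split=> //.
  have [m em] := memG g0G; rewrite -e em -comm_sigX // gx pi_commX //.
have nxy : x != y.
  apply/negP => /eqP e; apply: (negP hn); apply/existsP; exists 1%g; by rewrite group1 perm1 e eqxx.
have ns : ~~ selfp G x y.
  apply/negP => /existsP[g /andP[gG /andP[e _]]].
  by apply: (negP hn); apply/existsP; exists g; rewrite gG e.
exact: hH.
Qed.

Definition L x := #|porbit sig x|.

Lemma L_gt0 x : (0 < L x)%N.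
Proof. by rewrite lt0n card_porbit_neq0. Qed.

Lemma iter_mod x a : iter a sig x = iter (a %% L x) sig x.
Proof.
rewrite {1}(divn_eq a (L x)) addnC iterD; congr (iter _ _ _).
elim: (a %/ L x) => // k IHk; rewrite mulSn iterD IHk.
exact: iter_porbit.
Qed.

Lemma orbit_mod x a b : ((sig ^+ a) x == (sig ^+ b) x) = (a == b %[mod L x]).
Proof.
rewrite !permX (iter_mod x a) (iter_mod x b).
have hl := L_gt0 x.
rewrite -!(nth_traject _ (ltn_pmod _ hl)) nth_uniq ?size_traject ?ltn_pmod //.
exact: uniq_traject_porbit.
Qed.

Lemma natmod_dvdz (d a b : nat) : (a == b %[mod d])%N = ((d%:Z %| (a%:Z - b%:Z)%R)%Z).
Proof. by rewrite -eqz_mod_dvd !modz_nat eqz_nat. Qed.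

Lemma pi_in_G : pi \in G.
Proof.
have hm : forall x, exists m, (sig ^+ m) x == pi x.
  move=> x; have [g /memG[m ->] e] := pi_orb x; by exists m; rewrite e.
pose m x := ex_minn (hm x).
have mE : forall x, (sig ^+ m x) x = pi x.
  by move=> x; rewrite /m; case: ex_minnP => k /eqP.
have [X hX] : exists X : int, forall i, i \in enum 'I_n -> (Posz (L i) %| (X - Posz (m i))%R)%Z.
  apply: (@crt_seq _ L (fun x => Posz (m x))) => x y _ _.
  have [g /memG[k ->] [e1 e2]] := pi_pair x y.
  have h1 : (Posz (L x) %| (Posz k - Posz (m x))%R)%Z by rewrite -natmod_dvdz -orbit_mod e1 mE.
  have h2 : (Posz (L y) %| (Posz k - Posz (m y))%R)%Z by rewrite -natmod_dvdz -orbit_mod e2 mE.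
  have -> : (Posz (m x) - Posz (m y) = (Posz k - Posz (m y)) - (Posz k - Posz (m x)))%R.
  by ring.
  rewrite rpredB //.
    by apply: dvdz_trans h2; rewrite dvdzE /= dvdn_gcdr.
  by apply: dvdz_trans h1; rewrite dvdzE /= dvdn_gcdl.
set N := #[sig].
have N0 : (N != 0)%N by rewrite -lt0n order_gt0.
have LN : forall x, (L x %| N)%N.
  move=> x; have := orbit_mod x N 0; rewrite expg_order expg0 eqxx mod0n.
  by move=> h; rewrite /dvdn -h.
pose e := absz (X %% Posz N)%Z.
have eE : Posz e = (X %% Posz N)%Z by rewrite /e gez0_abs // modz_ge0.
suff -> : pi = (sig ^+ e) by rewrite hG mem_cycle.
apply/permP => x; rewrite -mE; apply/eqP; rewrite orbit_mod natmod_dvdz eE -opprB rpredN.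
have -> : ((X %% Posz N)%Z - Posz (m x) = (X - Posz (m x)) - (X %/ Posz N)%Z * Posz N)%R.
  by rewrite {2}(divz_eq X (Posz N)); ring.
rewrite rpredB ?hX ?mem_enum //.
by apply: dvdz_mull; rewrite dvdzE /= LN.
Qed.

End F.

End MF.
Import MF.

Local Open Scope ring_scope.

Theorem proposition3p4 (n : nat) (G : {group 'S_n}) :
  (1 <= n)%N -> cyclic G ->
  exists N : nat, forall k : fieldType,
    card_at_least k N ->
    (~~ odd #|G| -> (2%:R : k) != 0) ->
    exists q : 'M[k]_n, quantum_param_matrix q /\
      (forall A : 'M[k]_n, Aut_gr q A <-> monomial_group G A).
Proof.
move=> _ /cyclicP [sig hG].
exists (2 * #|{: 'I_n * 'I_n}| + 4)%N => k hk h2.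
have [a ha] := exists_generic hk.
have hg : generic n a by move=> m m' hm hm'; apply: ha.
have hq := qmat_quantum G hg.
exists (qmat G a); split=> // A; split.
- case=> hu hp _.
  have hq1 : forall i j, i != j -> qmat G a i j != 1 by move=> i j nij; apply: qmat_neq1.
  have [d [s [hd -> hs]]] := aut_mono hq hq1 hu hp.
  have sG : (s^-1)%g \in G.
    apply: (pi_in_G (sig := sig)) => // i j nij ns.
    have [g gG [e1 e2]] := qmat_ident hg nij ns (hs i j).
    by exists g.
  exists d; split=> //; exists s => //.
  by rewrite -[s]invgK groupV.
- case=> d [hd [s sG ->]].
  have hs : forall x y, qmat G a ((s^-1)%g x) ((s^-1)%g y) = qmat G a x y.
    by move=> x y; rewrite qmat_act // groupV.
  split; first exact: mono_unit.
    exact: mono_pres.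
  rewrite (mono_inv s hd); apply: mono_pres => x y.
  by rewrite invgK qmat_act.
Qed.
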